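(* Let $V\in\mathfrak M_S$ and let $\mathfrak h$ be a principal subalgebra of $\mathfrak g_2$. Then $\mathfrak h$ is adapted to $V$ if and only if $\theta_V\in H^{\mathfrak h}$, where $\theta_V\in G_2$ is defined by $\theta_V|_V=\mathrm{id}$, $\theta_V|_{V^\perp}=-\mathrm{id}$, and $H^{\mathfrak h}=\{F\in G_2: F\mathfrak hF^{-1}\subseteq\mathfrak h\}$.
   Context: Setup: Let $\langle\cdot,\cdot\rangle$ be the standard inner product on $\mathbb R^7$ with standard basis $e_1,\dots,e_7$, and let $\times$ be the anticommutative bilinear product on $\mathbb R^7$ determined by $e_i\times e_{i+1}=e_{i+3}$, $e_{i+1}\times e_{i+3}=e_i$, $e_{i+3}\times e_i=e_{i+1}$ (indices mod 7); it is a cross product. $G_2=\mathrm{Aut}(\mathbb R^7,\times)$, with Lie algebra $\mathfrak g_2=\mathrm{Der}(\mathbb R^7,\times)=\{d\in\mathfrak{gl}(7,\mathbb R): d(x\times y)=d(x)\times y+x\times d(y)\}$. $\mathfrak M_S=\{V\le\mathbb R^7:\dim V=3,\ V\times V\subseteq V\}$; for $V\in\mathfrak M_S$ one has $V\times V^\perp\subseteq V^\perp$ and $V^\perp\times V^\perp\subseteq V$, so $\theta_V$ is an automorphism of order two. For $V\in\mathfrak M_S$: $\mathfrak h_4^V=\{d\in\mathfrak g_2: d(V^\perp)\subseteq V^\perp\}$ and $\mathfrak m_4^V=\{d\in\mathfrak g_2: d(V)\subseteq V^\perp,\ d(V^\perp)\subseteq V\}$. A principal subalgebra of $\mathfrak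 g_2$ is a three-dimensional simple subalgebra $\mathfrak h$ whose complexification contains a principal (regular) nilpotent element of $\mathfrak g_2\otimes\mathbb C$ (one whose adjoint orbit is dense in the nilpotent variety). A principal subalgebra $\mathfrak h$ is adapted to $V\in\mathfrak M_S$ if $\mathfrak h=(\mathfrak h\cap\mathfrak h_4^V)\oplus(\mathfrak h\cap\mathfrak m_4^V)$. *)

(* Defs.v *)
(* Linear maps of F^7 are 7x7 matrices acting on COLUMN
   vectors: d applied to x is  d *m x, so composition is matrix product. *)
From HB Require Import structures.
From mathcomp Require Import all_boot all_order all_algebra.
From mathcomp Require Import reals.
From mathcomp Require Import complex.
Set Implicit Arguments. Unset Strict Implicit. Unset Printing Implicit Defensive.
Import Order.TTheory GRing.Theory Num.Theory.
Local Open Scope ring_scope.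

Section G2defs.
Variable F : fieldType.

(* standard basis vector e_{k mod 7} (indices 0..6 stand for e_1..e_7) *)
Definition e7 (k : nat) : 'cV[F]_7 := delta_mx (inord (k %% 7)) 0.

(* the product on basis vectors: e_i x e_{i+1} = e_{i+3},
   e_{i+1} x e_{i+3} = e_i, e_{i+3} x e_i = e_{i+1} (indices mod 7),
   extended anticommutatively (and e_a x e_a = 0) *)
Definition cross_basis (a b : 'I_7) : 'cV[F]_7 :=
  \sum_(i < 7)
    ( ((a == i :> nat) && (b == (i.+1 %% 7)%N :> nat))%:R *: e7 i.+3
    + ((a == (i.+1 %% 7)%N :> nat) && (b == (i.+3 %% 7)%N :> nat))%:R *: e7 i
    + ((a == (i.+3 %% 7)%N :> nat) && (b == i :> nat))%:R *: e7 i.+1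
    - ((b == i :> nat) && (a == (i.+1 %% 7)%N :> nat))%:R *: e7 i.+3
    - ((b == (i.+1 %% 7)%N :> nat) && (a == (i.+3 %% 7)%N :> nat))%:R *: e7 i
    - ((b == (i.+3 %% 7)%N :> nat) && (a == i :> nat))%:R *: e7 i.+1).

Definition cross (x y : 'cV[F]_7) : 'cV[F]_7 :=
  \sum_(a < 7) \sum_(b < 7) (x a 0 * y b 0) *: cross_basis a b.

Definition is_der (d : 'M[F]_7) : Prop :=
  forall x y : 'cV[F]_7, d *m cross x y = cross (d *m x) y + cross x (d *m y).

Definition inG2 (g : 'M[F]_7) : Prop :=
  g \in unitmx /\ forall x y : 'cV[F]_7, g *m cross x y = cross (g *m x) (g *m y).

Definition lbr (a b : 'M[F]_7) : 'M[F]_7 := a * b - b * a.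

End G2defs.

Section Real.
Variable R : realType.

Definition dot (x y : 'cV[R]_7) : R := \sum_(a < 7) x a 0 * y a 0.

Definition in_perp (V : {vspace 'cV[R]_7}) (x : 'cV[R]_7) : Prop :=
  forall v, v \in V -> dot v x = 0.

Definition in_MS (V : {vspace 'cV[R]_7}) : Prop :=
  \dim V = 3%N /\ forall x y, x \in V -> y \in V -> cross x y \in V.

Definition in_h4 (V : {vspace 'cV[R]_7}) (d : 'M[R]_7) : Prop :=
  is_der d /\ forall x, in_perp V x -> in_perp V (d *m x).

Definition in_m4 (V : {vspace 'cV[R]_7}) (d : 'M[R]_7) : Prop :=
  is_der d /\ (forall x, x \in V -> in_perp V (d *m x))
           /\ (forall x, in_perp V x -> d *m x \in V).

Definition lie_subalg_g2 (h : {vspace 'M[R]_7}) : Prop :=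
  (forall d, d \in h -> is_der d) /\
  (forall a b, a \in h -> b \in h -> lbr a b \in h).

Definition lie_simple (h : {vspace 'M[R]_7}) : Prop :=
  (exists a b, [/\ a \in h, b \in h & lbr a b != 0]) /\
  forall I : {vspace 'M[R]_7}, (I <= h)%VS ->
    (forall a b, a \in h -> b \in I -> lbr a b \in I) ->
    I = 0%VS \/ I = h.

(* complexification  g_2 (x) C  = derivations of (C^7, x) *)
Local Notation C := (complex R).

Definition complexify (h : {vspace 'M[R]_7}) : {vspace 'M[C]_7} :=
  <<map (map_mx (fun r : R => (r%:C)%C)) (vbasis h)>>%VS.

Definition nilp_g2C (X : 'M[C]_7) : Prop :=
  is_der X /\ exists k : nat, forall Y, is_der Y -> iter k (lbr X) Y = 0.

Definition cent_dim (X : 'M[C]_7) (n : nat) : Prop :=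
  (exists s : seq 'M[C]_7, [/\ size s = n, free s &
      forall Y, Y \in s -> is_der Y /\ lbr X Y = 0]) /\
  (forall s : seq 'M[C]_7, free s ->
      (forall Y, Y \in s -> is_der Y /\ lbr X Y = 0) -> (size s <= n)%N).

Definition principal_nilp (X : 'M[C]_7) : Prop :=
  nilp_g2C X /\
  forall Y n m, is_der Y -> cent_dim X n -> cent_dim Y m -> (n <= m)%N.

Definition principal_subalg (h : {vspace 'M[R]_7}) : Prop :=
  [/\ \dim h = 3%N, lie_subalg_g2 h, lie_simple h &
      exists X, X \in complexify h /\ principal_nilp X].

Definition adapted (V : {vspace 'cV[R]_7}) (h : {vspace 'M[R]_7}) : Prop :=
  (forall d, d \in h -> exists a b,
      [/\ a \in h, in_h4 V a, b \in h, in_m4 V b & d = a + b]) /\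
  (forall d, d \in h -> in_h4 V d -> in_m4 V d -> d = 0).

Definition in_Hh (h : {vspace 'M[R]_7}) (g : 'M[R]_7) : Prop :=
  inG2 g /\ forall d, d \in h -> g * d * invmx g \in h.

End Real.

(* Main.v *)
Require Import Defs.
From HB Require Import structures.
From mathcomp Require Import all_boot all_order all_algebra.
From mathcomp Require Import reals complex.
From mathcomp Require Import ring lra.
From Stdlib Require Import Classical.
Import GRing.Theory Num.Theory.
Local Open Scope ring_scope.
Set Implicit Arguments. Unset Strict Implicit. Unset Printing Implicit Defensive.

Notation o0 := (@Ordinal 7 0 isT).
Notation o1 := (@Ordinal 7 1 isT).
Notation o2 := (@Ordinal 7 2 isT).
Notation o3 := (@Ordinal 7 3 isT).
Notation o4 := (@Ordinal 7 4 isT).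
Notation o5 := (@Ordinal 7 5 isT).
Notation o6 := (@Ordinal 7 6 isT).
Definition Ptbl : seq (seq (seq nat)) := [:: [:: [:: 0; 0; 0; 0; 0; 0; 0]; [:: 0; 0; 0; 1; 0; 0; 0]; [:: 0; 0; 0; 0; 0; 0; 1]; [:: 0; 0; 0; 0; 0; 0; 0]; [:: 0; 0; 0; 0; 0; 1; 0]; [:: 0; 0; 0; 0; 0; 0; 0]; [:: 0; 0; 0; 0; 0; 0; 0]]; [:: [:: 0; 0; 0; 0; 0; 0; 0]; [:: 0; 0; 0; 0; 0; 0; 0]; [:: 0; 0; 0; 0; 1; 0; 0]; [:: 1; 0; 0; 0; 0; 0; 0]; [:: 0; 0; 0; 0; 0; 0; 0]; [:: 0; 0; 0; 0; 0; 0; 1]; [:: 0; 0; 0; 0; 0; 0; 0]]; [:: [:: 0; 0; 0; 0; 0; 0; 0]; [:: 0; 0; 0; 0; 0; 0; 0]; [:: 0; 0; 0; 0; 0; 0; 0]; [:: 0; 0; 0; 0; 0; 1; 0]; [:: 0; 1; 0; 0; 0; 0; 0]; [:: 0; 0; 0; 0; 0; 0; 0]; [:: 1; 0; 0; 0; 0; 0; 0]]; [:: [:: 0; 1; 0; 0; 0; 0; 0]; [:: 0; 0; 0; 0; 0; 0; 0]; [:: 0; 0; 0; 0; 0; 0; 0]; [:: 0; 0; 0; 0; 0; 0; 0]; [:: 0; 0; 0; 0; 0; 0; 1]; [:: 0; 0; 1; 0; 0; 0; 0]; [:: 0; 0; 0; 0; 0; 0; 0]]; [:: [:: 0; 0;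 0; 0; 0; 0; 0]; [:: 0; 0; 1; 0; 0; 0; 0]; [:: 0; 0; 0; 0; 0; 0; 0]; [:: 0; 0; 0; 0; 0; 0; 0]; [:: 0; 0; 0; 0; 0; 0; 0]; [:: 1; 0; 0; 0; 0; 0; 0]; [:: 0; 0; 0; 1; 0; 0; 0]]; [:: [:: 0; 0; 0; 0; 1; 0; 0]; [:: 0; 0; 0; 0; 0; 0; 0]; [:: 0; 0; 0; 1; 0; 0; 0]; [:: 0; 0; 0; 0; 0; 0; 0]; [:: 0; 0; 0; 0; 0; 0; 0]; [:: 0; 0; 0; 0; 0; 0; 0]; [:: 0; 1; 0; 0; 0; 0; 0]]; [:: [:: 0; 0; 1; 0; 0; 0; 0]; [:: 0; 0; 0; 0; 0; 1; 0]; [:: 0; 0; 0; 0; 0; 0; 0]; [:: 0; 0; 0; 0; 1; 0; 0]; [:: 0; 0; 0; 0; 0; 0; 0]; [:: 0; 0; 0; 0; 0; 0; 0]; [:: 0; 0; 0; 0; 0; 0; 0]]].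
Definition Ntbl : seq (seq (seq nat)) := [:: [:: [:: 0; 0; 0; 0; 0; 0; 0]; [:: 0; 0; 0; 0; 0; 0; 0]; [:: 0; 0; 0; 0; 0; 0; 0]; [:: 0; 1; 0; 0; 0; 0; 0]; [:: 0; 0; 0; 0; 0; 0; 0]; [:: 0; 0; 0; 0; 1; 0; 0]; [:: 0; 0; 1; 0; 0; 0; 0]]; [:: [:: 0; 0; 0; 1; 0; 0; 0]; [:: 0; 0; 0; 0; 0; 0; 0]; [:: 0; 0; 0; 0; 0; 0; 0]; [:: 0; 0; 0; 0; 0; 0; 0]; [:: 0; 0; 1; 0; 0; 0; 0]; [:: 0; 0; 0; 0; 0; 0; 0]; [:: 0; 0; 0; 0; 0; 1; 0]]; [:: [:: 0; 0; 0; 0; 0; 0; 1]; [:: 0; 0; 0; 0; 1; 0; 0]; [:: 0; 0; 0; 0; 0; 0; 0]; [:: 0; 0; 0; 0; 0; 0; 0]; [:: 0; 0; 0; 0; 0; 0; 0]; [:: 0; 0; 0; 1; 0; 0; 0]; [:: 0; 0; 0; 0; 0; 0; 0]]; [:: [:: 0; 0; 0; 0; 0; 0; 0]; [:: 1; 0; 0; 0; 0; 0; 0]; [:: 0; 0; 0; 0; 0; 1; 0]; [:: 0; 0; 0; 0; 0; 0; 0]; [:: 0; 0; 0; 0; 0; 0; 0]; [:: 0; 0; 0; 0; 0; 0; 0]; [:: 0; 0; 0; 0; 1; 0; 0]]; [:: [:: 0; 0; 0; 0; 0; 1; 0]; [:: 0; 0; 0; 0; 0; 0; 0]; [:: 0;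 1; 0; 0; 0; 0; 0]; [:: 0; 0; 0; 0; 0; 0; 1]; [:: 0; 0; 0; 0; 0; 0; 0]; [:: 0; 0; 0; 0; 0; 0; 0]; [:: 0; 0; 0; 0; 0; 0; 0]]; [:: [:: 0; 0; 0; 0; 0; 0; 0]; [:: 0; 0; 0; 0; 0; 0; 1]; [:: 0; 0; 0; 0; 0; 0; 0]; [:: 0; 0; 1; 0; 0; 0; 0]; [:: 1; 0; 0; 0; 0; 0; 0]; [:: 0; 0; 0; 0; 0; 0; 0]; [:: 0; 0; 0; 0; 0; 0; 0]]; [:: [:: 0; 0; 0; 0; 0; 0; 0]; [:: 0; 0; 0; 0; 0; 0; 0]; [:: 1; 0; 0; 0; 0; 0; 0]; [:: 0; 0; 0; 0; 0; 0; 0]; [:: 0; 0; 0; 1; 0; 0; 0]; [:: 0; 1; 0; 0; 0; 0; 0]; [:: 0; 0; 0; 0; 0; 0; 0]]].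

Lemma sum7 {V : nmodType} (G : 'I_7 -> V) :
  \sum_(i < 7) G i = G o0 + G o1 + G o2 + G o3 + G o4 + G o5 + G o6.
Proof.
rewrite !big_ord_recl big_ord0 addr0 /= !addrA.
by repeat congr (_ + _); congr G; apply/val_inj.
Qed.

Lemma ord7_ind (P : 'I_7 -> Prop) :
  P o0 -> P o1 -> P o2 -> P o3 -> P o4 -> P o5 -> P o6 -> forall i, P i.
Proof.
move=> H0 H1 H2 H3 H4 H5 H6 [[|[|[|[|[|[|[|n]]]]]]] Hi] //;
  by rewrite (bool_irrelevance Hi isT).
Qed.

Lemma e7E (F : fieldType) n (k : 'I_7) : (e7 F n) k 0 = (k == (n %% 7)%N :> nat)%:R.
Proof. by rewrite /e7 mxE andbT -val_eqE /= inordK ?ltn_pmod. Qed.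

Lemma eq_inord (k : 'I_7) m : (m < 7)%N -> (k == inord m) = (k == m :> nat).
Proof. by move=> Hm; rewrite -val_eqE /= inordK. Qed.

Definition Pn (a b k : nat) : nat :=
  \sum_(0 <= i < 7) (((a == i) && (b == i.+1 %% 7)) * (k == i.+3 %% 7)
              + ((a == i.+1 %% 7) && (b == i.+3 %% 7)) * (k == i %% 7)
              + ((a == i.+3 %% 7) && (b == i)) * (k == i.+1 %% 7))%N.
Definition Nn (a b k : nat) : nat :=
  \sum_(0 <= i < 7) (((b == i) && (a == i.+1 %% 7)) * (k == i.+3 %% 7)
              + ((b == i.+1 %% 7) && (a == i.+3 %% 7)) * (k == i %% 7)
              + ((b == i.+3 %% 7) && (a == i)) * (k == i.+1 %% 7))%N.

Lemma cbE (F : fieldType) (a b k : 'I_7) :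
  (cross_basis F a b) k 0 = (Pn a b k)%:R - (Nn a b k)%:R.
Proof.
rewrite /cross_basis summxE /Pn /Nn !big_mkord !natr_sum -sumrB; apply: eq_bigr => i _.
rewrite !mxE !eqxx !andbT !eq_inord ?ltn_pmod // !natrD !natrM; ring.
Qed.

Definition tb (t : seq (seq (seq nat))) (a b k : nat) := nth 0%N (nth [::] (nth [::] t a) b) k.


Definition chk (f : nat -> nat -> nat -> nat) t :=
  all (fun a => all (fun b => all (fun k => f a b k == tb t a b k) (iota 0 7)) (iota 0 7)) (iota 0 7).
Lemma PnE' : chk Pn Ptbl.
Proof. rewrite /chk /Pn unlock. by vm_compute. Qed.
Lemma NnE' : chk Nn Ntbl.
Proof. rewrite /chk /Nn unlock. by vm_compute. Qed.
Lemma chkE f t : chk f t -> forall a b k : 'I_7, f a b k = tb t a b k.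
Proof.
move=> /allP H a b k; move: (H a); rewrite mem_iota ltn_ord => /(_ isT) /allP /(_ b).
rewrite mem_iota ltn_ord => /(_ isT) /allP /(_ k); rewrite mem_iota ltn_ord => /(_ isT) /eqP //.
Qed.

Lemma crossEg (F : fieldType) (x y : 'cV[F]_7) k :
  cross x y k 0 = \sum_(a < 7) \sum_(b < 7) x a 0 * y b 0 * ((tb Ptbl a b k)%:R - (tb Ntbl a b k)%:R).
Proof.
rewrite /cross summxE; apply: eq_bigr => a _; rewrite summxE; apply: eq_bigr => b _.
by rewrite mxE cbE (chkE PnE') (chkE NnE').
Qed.

Lemma cross0 (F : fieldType) (x y : 'cV[F]_7) : cross x y o0 0 = x o1 0*y o3 0 - x o3 0*y o1 0 + x o2 0*y o6 0 - x o6 0*y o2 0 + x o4 0*y o5 0 - x o5 0*y o4 0.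
Proof. rewrite crossEg !sum7 /tb /=. ring. Qed.

Lemma cross1 (F : fieldType) (x y : 'cV[F]_7) : cross x y o1 0 = x o2 0*y o4 0 - x o4 0*y o2 0 + x o3 0*y o0 0 - x o0 0*y o3 0 + x o5 0*y o6 0 - x o6 0*y o5 0.
Proof. rewrite crossEg !sum7 /tb /=. ring. Qed.

Lemma cross2 (F : fieldType) (x y : 'cV[F]_7) : cross x y o2 0 = x o3 0*y o5 0 - x o5 0*y o3 0 + x o4 0*y o1 0 - x o1 0*y o4 0 + x o6 0*y o0 0 - x o0 0*y o6 0.
Proof. rewrite crossEg !sum7 /tb /=. ring. Qed.

Lemma cross3 (F : fieldType) (x y : 'cV[F]_7) : cross x y o3 0 = x o0 0*y o1 0 - x o1 0*y o0 0 + x o4 0*y o6 0 - x o6 0*y o4 0 + x o5 0*y o2 0 - x o2 0*y o5 0.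
Proof. rewrite crossEg !sum7 /tb /=. ring. Qed.

Lemma cross4 (F : fieldType) (x y : 'cV[F]_7) : cross x y o4 0 = x o1 0*y o2 0 - x o2 0*y o1 0 + x o5 0*y o0 0 - x o0 0*y o5 0 + x o6 0*y o3 0 - x o3 0*y o6 0.
Proof. rewrite crossEg !sum7 /tb /=. ring. Qed.

Lemma cross5 (F : fieldType) (x y : 'cV[F]_7) : cross x y o5 0 = x o0 0*y o4 0 - x o4 0*y o0 0 + x o2 0*y o3 0 - x o3 0*y o2 0 + x o6 0*y o1 0 - x o1 0*y o6 0.
Proof. rewrite crossEg !sum7 /tb /=. ring. Qed.

Lemma cross6 (F : fieldType) (x y : 'cV[F]_7) : cross x y o6 0 = x o0 0*y o2 0 - x o2 0*y o0 0 + x o1 0*y o5 0 - x o5 0*y o1 0 + x o3 0*y o4 0 - x o4 0*y o3 0.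
Proof. rewrite crossEg !sum7 /tb /=. ring. Qed.

Ltac crs := rewrite ?(mxE, cross0, cross1, cross2, cross3, cross4, cross5, cross6).
Lemma cV7P {F : Type} (A B : 'cV[F]_7) : (forall i, A i 0 = B i 0) -> A = B.
Proof. by move=> H; apply/matrixP => i j; rewrite (ord1 j). Qed.
Ltac vec := apply: cV7P; apply: ord7_ind; crs; ring.
Ltac dt := rewrite /dot ?sum7; crs; ring.

Section Ids.
Variable R : realType.
Implicit Types x y z p u v w : 'cV[R]_7.

Lemma crossC x y : cross x y = - cross y x. Proof. vec. Qed.
Lemma crossDl x y z : cross (x + y) z = cross x z + cross y z. Proof. vec. Qed.
Lemma crossDr x y z : cross x (y + z) = cross x y + cross x z. Proof. vec. Qed.
Lemma crossZl k x y : cross (k *: x) y = k *: cross x y. Proof. vec. Qed.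
Lemma crossZr k x y : cross x (k *: y) = k *: cross x y. Proof. vec. Qed.
Lemma crossNl x y : cross (- x) y = - cross x y. Proof. vec. Qed.
Lemma crossNr x y : cross x (- y) = - cross x y. Proof. vec. Qed.
Lemma crossBl x y z : cross (x - y) z = cross x z - cross y z. Proof. vec. Qed.
Lemma crossBr x y z : cross x (y - z) = cross x y - cross x z. Proof. vec. Qed.
Lemma cross0l x : cross 0 x = 0. Proof. vec. Qed.
Lemma cross0r x : cross x 0 = 0. Proof. vec. Qed.
Lemma crossxx x : cross x x = 0. Proof. vec. Qed.
Lemma cross_dbl x y : cross x (cross x y) = dot x y *: x - dot x x *: y.
Proof. apply: cV7P; apply: ord7_ind; rewrite /dot !sum7; crs; ring. Qed.
Lemma dot_cross x y z : dot (cross x y) z = dot x (cross y z). Proof. dt. Qed.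
Lemma dot_cross2 x y p : dot (cross x p) (cross y p) = dot x y * dot p p - dot x p * dot y p.
Proof. dt. Qed.
Lemma dotC x y : dot x y = dot y x. Proof. dt. Qed.
Lemma dotDl x y z : dot (x + y) z = dot x z + dot y z. Proof. dt. Qed.
Lemma dotDr x y z : dot x (y + z) = dot x y + dot x z. Proof. dt. Qed.
Lemma dotBl x y z : dot (x - y) z = dot x z - dot y z. Proof. dt. Qed.
Lemma dotBr x y z : dot x (y - z) = dot x y - dot x z. Proof. dt. Qed.
Lemma dotNl x y : dot (- x) y = - dot x y. Proof. dt. Qed.
Lemma dotNr x y : dot x (- y) = - dot x y. Proof. dt. Qed.
Lemma dotZl k x y : dot (k *: x) y = k * dot x y. Proof. dt. Qed.
Lemma dotZr k x y : dot x (k *: y) = k * dot x y. Proof. dt. Qed.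
Lemma dot0l x : dot 0 x = 0. Proof. dt. Qed.
Lemma dot0r x : dot x 0 = 0. Proof. dt. Qed.
Lemma dot_crossl x y : dot x (cross x y) = 0. Proof. dt. Qed.
Lemma dot_crossr x y : dot y (cross x y) = 0. Proof. dt. Qed.

Lemma dot_ge0 x : 0 <= dot x x.
Proof. by apply: sumr_ge0 => i _; apply: sqr_ge0. Qed.

Lemma dot_eq0 x : dot x x = 0 -> x = 0.
Proof.
move=> H; apply/matrixP => i j; rewrite (ord1 j) mxE.
have := @psumr_eq0P _ _ _ _ (fun k _ => sqr_ge0 (x k 0)) H i isT.
by move/eqP; rewrite mulf_eq0 orbb => /eqP.
Qed.

End Ids.
Section Lin.
Variable R : realType.
Implicit Types x y z p u v w : 'cV[R]_7.

Lemma span_orth v (X : seq 'cV[R]_7) :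
  (forall u, u \in X -> dot v u = 0) -> forall w, w \in <<X>>%VS -> dot v w = 0.
Proof.
elim: X => [|x X IH] H w.
  by rewrite span_nil memv0 => /eqP ->; rewrite dot0r.
rewrite span_cons => /memv_addP [u1 /vlineP [k ->] [u2 Hu2 ->]].
rewrite dotDr dotZr H ?mem_head // IH ?mulr0 ?addr0 // => u Hu.
by apply: H; rewrite in_cons Hu orbT.
Qed.

Lemma orth_free (X : seq 'cV[R]_7) :
  pairwise (fun u v => dot u v == 0) X -> all (fun u => dot u u != 0) X -> free X.
Proof.
elim: X => [|x X IH] /=; first by rewrite /free span_nil dimv0.
move=> /andP [Hx HX] /andP [Hxx HXX].
rewrite free_cons IH // andbT; apply/negP => Hsp.
have := span_orth (v := x) (X := X) _ Hsp.
by move/(_ (fun u Hu => eqP (allP Hx u Hu)))/eqP; rewrite (negbTE Hxx).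
Qed.

Lemma orth_zero (U : {vspace 'cV[R]_7}) (X : seq 'cV[R]_7) y :
  {subset X <= U} -> pairwise (fun u v => dot u v == 0) X ->
  all (fun u => dot u u != 0) X -> size X = \dim U -> y \in U ->
  all (fun u => dot y u == 0) X -> y = 0.
Proof.
move=> sXU pX nX sz yU oy; apply/eqP; apply: contraT => ny.
have fr : free (y :: X).
  apply: orth_free; rewrite /= ?oy ?pX ?nX //.
  rewrite andbT; by apply: contra ny => /eqP /dot_eq0 ->.
have : (<<y :: X>> <= U)%VS.
  by apply/span_subvP => u; rewrite in_cons => /orP [/eqP -> //|/sXU].
move/dimvS; move: fr; rewrite /free => /eqP -> /=; rewrite sz.
by rewrite ltnn.
Qed.

Lemma dimf7 : \dim (fullv : {vspace 'cV[R]_7}) = 7%N.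
Proof. by rewrite dimvf /dim /=. Qed.

Lemma mx_ext (A B : 'M[R]_7) : (forall x : 'cV[R]_7, A *m x = B *m x) -> A = B.
Proof.
move=> H; apply/matrixP => i j; have := H (delta_mx j 0).
by rewrite -!colE => /matrixP /(_ i 0); rewrite !mxE.
Qed.

End Lin.
Definition pr {R : realType} (u x : 'cV[R]_7) := (dot u x / dot u u) *: u.

Lemma dot_pr {R : realType} (w u x : 'cV[R]_7) : dot w (pr u x) = dot u x / dot u u * dot w u.
Proof. by rewrite /pr dotZr. Qed.

Lemma cross_pcp {R : realType} (p u : 'cV[R]_7) : cross p (cross u p) = dot p p *: u - dot p u *: p.
Proof. by rewrite (crossC u p) crossNr cross_dbl opprB. Qed.

Section Struct.
Variable R : realType.
Variable V : {vspace 'cV[R]_7}.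
Hypothesis HV : in_MS V.
Implicit Types x y z p q u v w : 'cV[R]_7.

Lemma VW0 v : v \in V -> in_perp V v -> v = 0.
Proof. by move=> Hv Hp; apply: dot_eq0; apply: Hp. Qed.

Lemma VxW v p : v \in V -> in_perp V p -> in_perp V (cross v p).
Proof. by move=> Hv Hp w Hw; rewrite -dot_cross; apply: Hp; apply: HV.2. Qed.

Lemma dot_VxW p u u' : in_perp V p -> u \in V -> u' \in V -> dot u (cross u' p) = 0.
Proof. by move=> Hp Hu Hu'; rewrite -dot_cross; apply: Hp; apply: HV.2. Qed.

Lemma dotVW p u : in_perp V p -> u \in V -> dot u p = 0.
Proof. by move=> Hp Hu; apply: Hp. Qed.

Lemma dotWV p u : in_perp V p -> u \in V -> dot p u = 0.
Proof. by move=> Hp Hu; rewrite dotC; apply: Hp. Qed.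

Lemma ex_a : exists a, a \in V /\ dot a a != 0.
Proof.
apply: NNPP => H.
have : (V <= 0)%VS.
  apply/subvP => v Hv; rewrite memv0; apply/eqP/dot_eq0.
  apply/eqP; apply: contraT => Hn; exfalso; apply: H; by exists v.
by move/dimvS; rewrite dimv0 HV.1.
Qed.

Lemma ex_b a : a \in V -> dot a a != 0 ->
  exists b, [/\ b \in V, dot b b != 0 & dot a b = 0].
Proof.
move=> Ha Haa; apply: NNPP => H.
have : (V <= <[a]>)%VS.
  apply/subvP => v Hv.
  have Hv' : v - pr a v \in V by rewrite memvB // memvZ.
  have Ho : dot a (v - pr a v) = 0.
    by rewrite dotBr dot_pr; field; rewrite Haa.
  have : v - pr a v = 0.
    apply/dot_eq0/eqP; apply: contraT => Hn; exfalso; apply: H.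
    by exists (v - pr a v).
  by move/eqP; rewrite subr_eq0 => /eqP ->; rewrite memvZ // memv_line.
by move/dimvS; rewrite dim_vline HV.1; case: (a != 0).
Qed.

Section WithAB.
Variables a b : 'cV[R]_7.
Hypotheses (Ha : a \in V) (Hb : b \in V) (Haa : dot a a != 0) (Hbb : dot b b != 0)
  (Hab : dot a b = 0).
Let c := cross a b.

Lemma Hc : c \in V. Proof. exact: HV.2. Qed.
Lemma Hac : dot a c = 0. Proof. exact: dot_crossl. Qed.
Lemma Hbc : dot b c = 0. Proof. exact: dot_crossr. Qed.
Lemma Hcc : dot c c != 0.
Proof. by rewrite /c dot_cross2 Hab mulr0 subr0 mulf_neq0. Qed.

Definition piV x := pr a x + pr b x + pr c x.

Lemma piV_in x : piV x \in V.
Proof. by rewrite /piV !memvD // memvZ // Hc. Qed.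

Lemma Hba : dot b a = 0. Proof. by rewrite dotC. Qed.
Lemma Hca : dot c a = 0. Proof. by rewrite dotC Hac. Qed.
Lemma Hcb : dot c b = 0. Proof. by rewrite dotC Hbc. Qed.

Lemma res_a x : dot a (x - piV x) = 0.
Proof.
have := Hcc; rewrite dotBr /piV !dotDr !dot_pr Hab Hac => Hc'. field. by rewrite Hc' Haa Hbb.
Qed.
Lemma res_b x : dot b (x - piV x) = 0.
Proof. have := Hcc; rewrite dotBr /piV !dotDr !dot_pr Hba Hbc => Hc'. field. by rewrite Hc' Haa Hbb. Qed.
Lemma res_c x : dot c (x - piV x) = 0.
Proof. have := Hcc; rewrite dotBr /piV !dotDr !dot_pr Hca Hcb => Hc'. field. by rewrite Hc' Haa Hbb. Qed.

Lemma V_eq v : v \in V -> v = piV v.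
Proof.
move=> Hv; apply/eqP; rewrite -subr_eq0; apply/eqP.
apply: (orth_zero (U := V) (X := [:: a; b; c])).
- by move=> u; rewrite !in_cons orbF => /or3P [] /eqP ->; rewrite ?Hc.
- by rewrite /= Hab Hac Hbc eqxx.
- by rewrite /= Haa Hbb Hcc.
- by rewrite HV.1.
- by rewrite memvB // piV_in.
- by rewrite /= !(dotC _ a, dotC _ b, dotC _ c) res_a res_b res_c eqxx.
Qed.

Lemma perp_of x : dot a x = 0 -> dot b x = 0 -> dot c x = 0 -> in_perp V x.
Proof.
move=> H1 H2 H3 w Hw; rewrite (V_eq Hw) /piV /pr !dotDl !dotZl H1 H2 H3.
by rewrite !mulr0 !addr0.
Qed.

Lemma res_perp x : in_perp V (x - piV x).
Proof. exact: perp_of (res_a x) (res_b x) (res_c x). Qed.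

Lemma decomp x : exists v p, [/\ v \in V, in_perp V p & x = v + p].
Proof. exists (piV x), (x - piV x); split; [exact: piV_in | exact: res_perp | by rewrite addrCA subrr addr0]. Qed.

Lemma ex_p : exists p, in_perp V p /\ dot p p != 0.
Proof.
apply: NNPP => H.
have : (fullv <= V)%VS.
  apply/subvP => x _.
  have : x - piV x = 0.
    apply/dot_eq0/eqP; apply: contraT => Hn; exfalso; apply: H.
    by exists (x - piV x); split => //; exact: res_perp.
  by move/eqP; rewrite subr_eq0 => /eqP ->; rewrite piV_in.
by move/dimvS; rewrite dimf7 HV.1.
Qed.

Lemma WxW p q : in_perp V p -> in_perp V q -> cross p q \in V.
Proof.
move=> Hp Hq.
have [/eqP Hpp|Hpp] := boolP (dot p p == 0).
  by rewrite (dot_eq0 Hpp) cross0l mem0v.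
set ap := cross a p; set bp := cross b p; set cp := cross c p.
have Hapap : dot ap ap = dot a a * dot p p by rewrite dot_cross2 (dotVW Hp Ha) mulr0 subr0.
have Hbpbp : dot bp bp = dot b b * dot p p by rewrite dot_cross2 (dotVW Hp Hb) mulr0 subr0.
have Hcpcp : dot cp cp = dot c c * dot p p by rewrite dot_cross2 (dotVW Hp Hc) mulr0 subr0.
have Hapbp : dot ap bp = 0 by rewrite dot_cross2 Hab (dotVW Hp Ha) mul0r mul0r subrr.
have Hapcp : dot ap cp = 0 by rewrite dot_cross2 Hac (dotVW Hp Ha) mul0r mul0r subrr.
have Hbpcp : dot bp cp = 0 by rewrite dot_cross2 Hbc (dotVW Hp Hb) mul0r mul0r subrr.
have Hpap : dot p ap = 0 by rewrite dot_crossr.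
have Hpbp : dot p bp = 0 by rewrite dot_crossr.
have Hpcp : dot p cp = 0 by rewrite dot_crossr.
have Hc' := Hc; have Hcc' := Hcc.
have Haap : dot a ap = 0 by apply: dot_VxW.
have Habp : dot a bp = 0 by apply: dot_VxW.
have Hacp : dot a cp = 0 by apply: dot_VxW.
have Hbap : dot b ap = 0 by apply: dot_VxW.
have Hbbp : dot b bp = 0 by apply: dot_VxW.
have Hbcp : dot b cp = 0 by apply: dot_VxW.
have Hcap : dot c ap = 0 by apply: dot_VxW.
have Hcbp : dot c bp = 0 by apply: dot_VxW.
have Hccp : dot c cp = 0 by apply: dot_VxW.
have Hap : dot a p = 0 by apply: dotVW.
have Hbp : dot b p = 0 by apply: dotVW.
have Hcp : dot c p = 0 by apply: dotVW.
have Hnz : forall k1 k2 : R, k1 != 0 -> k2 != 0 -> k1 * k2 != 0 by move=> *; apply: mulf_neq0.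
set q' := q - pr p q - pr ap q - pr bp q - pr cp q.
have Hq' : q' = 0.
{ apply: (orth_zero (U := fullv) (X := [:: a; b; c; p; ap; bp; cp])).
  - by move=> *; apply: memvf.
  - by rewrite /= Hab Hac Hap Haap Habp Hacp Hbc Hbp Hbap Hbbp Hbcp Hcp Hcap Hcbp Hccp
      Hpap Hpbp Hpcp Hapbp Hapcp Hbpcp eqxx.
  - by rewrite /= Haa Hbb Hcc Hpp Hapap Hbpbp Hcpcp !Hnz.
  - by rewrite dimf7.
  - by apply: memvf.
  - rewrite /= !(dotC q') /q' !dotBr !dot_pr.
    rewrite (dotVW Hq Ha) (dotVW Hq Hb) (dotVW Hq Hc') (dotC ap p) (dotC bp p) (dotC cp p)
      (dotC bp ap) (dotC cp ap) (dotC cp bp) Hap Hbp Hcp Haap Habp Hacp Hbap Hbbp Hbcp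
      Hcap Hcbp Hccp Hpap Hpbp Hpcp Hapbp Hapcp Hbpcp !mulr0 !subr0 !divfK ?subrr ?eqxx //.
    all: by rewrite ?Hapap ?Hbpbp ?Hcpcp ?Hnz. }
have Hqe : q = q' + pr cp q + pr bp q + pr ap q + pr p q by rewrite /q' !subrK.
rewrite Hqe Hq' add0r !crossDr /pr !crossZr crossxx /cp /bp /ap !cross_pcp.
rewrite (dotWV Hp Ha) (dotWV Hp Hb) (dotWV Hp Hc') !scale0r !subr0 scaler0 addr0.
by rewrite !memvD ?memvZ.
Qed.

End WithAB.
End Struct.
Lemma mulE {R : realType} (A B : 'M[R]_7) : A * B = A *m B.
Proof. by rewrite mulmxE. Qed.

Ltac zvec := apply: cV7P => i; rewrite !mxE; ring.

Section Main.
Variable R : realType.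
Variable V : {vspace 'cV[R]_7}.
Variable t : 'M[R]_7.
Hypothesis HV : in_MS V.
Hypothesis Hdec : forall x, exists v p, [/\ v \in V, in_perp V p & x = v + p].
Hypothesis HWW : forall p q, in_perp V p -> in_perp V q -> cross p q \in V.
Hypothesis Hexp : exists p, in_perp V p /\ dot p p != 0.
Hypothesis Hexa : exists a, a \in V /\ dot a a != 0.
Hypothesis HtV : forall x, x \in V -> t *m x = x.
Hypothesis HtW : forall x, in_perp V x -> t *m x = - x.
Implicit Types x y z p q u v w : 'cV[R]_7.

Lemma perpN x : in_perp V x -> in_perp V (- x).
Proof. by move=> H w Hw; rewrite dotNr H // oppr0. Qed.

Lemma tt x : t *m (t *m x) = x.
Proof.
have [v [p [Hv Hp ->]]] := Hdec x.
by rewrite mulmxDr (HtV Hv) (HtW Hp) mulmxDr mulmxN (HtV Hv) (HtW Hp) opprK.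
Qed.

Lemma tt1 : t *m t = 1%:M.
Proof. by apply: mx_ext => x; rewrite -mulmxA tt mul1mx. Qed.

Lemma t_unit : t \in unitmx.
Proof. by case: (mulmx1_unit tt1). Qed.

Lemma t_inv : invmx t = t.
Proof.
have := mulVmx t_unit; move/(congr1 (mulmx^~ t)).
by rewrite -mulmxA tt1 mulmx1 mul1mx.
Qed.

Lemma eig_p y : t *m y = y -> y \in V.
Proof.
have [v [p [Hv Hp ->]]] := Hdec y.
rewrite mulmxDr (HtV Hv) (HtW Hp) => /addrI Hpp.
have : dot p p = 0.
  have : dot p (- p) = dot p p by rewrite Hpp.
  rewrite dotNr => H; lra.
by move/dot_eq0 ->; rewrite addr0.
Qed.

Lemma eig_m y : t *m y = - y -> in_perp V y.
Proof.
have [v [p [Hv Hp ->]]] := Hdec y.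
rewrite mulmxDr (HtV Hv) (HtW Hp) opprD => /eqP; rewrite -subr_eq0.
have -> : v + - p - (- v + - p) = v *+ 2 by zvec.
rewrite -scaler_nat scaler_eq0 pnatr_eq0 /= => /eqP ->.
by rewrite add0r.
Qed.

Lemma VxW' v p : v \in V -> in_perp V p -> in_perp V (cross v p).
Proof. by move=> Hv Hp w Hw; rewrite -dot_cross; apply: Hp; apply: HV.2. Qed.

Lemma t_G2 : inG2 t.
Proof.
split; first exact: t_unit.
move=> x y.
have [v [p [Hv Hp ->]]] := Hdec x.
have [w [q [Hw Hq ->]]] := Hdec y.
rewrite !mulmxDr (HtV Hv) (HtW Hp) (HtV Hw) (HtW Hq).
rewrite !crossDl !crossDr (crossC p w) !mulmxDr mulmxN.
rewrite (HtV (HV.2 _ _ Hv Hw)) (HtW (VxW' Hv Hq)) (HtW (VxW' Hw Hp)) (HtV (HWW Hp Hq)).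
rewrite !crossNl !crossNr (crossC p w) opprK.
zvec.
Qed.

Lemma conj_app (d : 'M[R]_7) x : (t * d * t) *m x = t *m (d *m (t *m x)).
Proof. by rewrite !mulE !mulmxA. Qed.

Lemma h4_V d : is_der d -> in_h4 V d -> forall v, v \in V -> d *m v \in V.
Proof.
move=> Hd [_ Hd4] v Hv.
have [p [Hp Hpp]] := Hexp.
have Hve : v = (dot p p)^-1 *: cross p (cross v p).
  rewrite cross_pcp (dotWV Hp Hv) scale0r subr0 scalerA mulVf //.
  by rewrite scale1r.
have Hvp := VxW' Hv Hp.
by rewrite Hve -scalemxAr Hd memvZ // memvD // HWW //; apply: Hd4.
Qed.

Lemma conj_h4 d : is_der d -> in_h4 V d -> t * d * t = d.
Proof.
move=> Hd Hd4; apply: mx_ext => x; rewrite conj_app.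
have [v [p [Hv Hp ->]]] := Hdec x.
have Hdp : in_perp V (d *m p) by apply: Hd4.2.
by rewrite !mulmxDr (HtV Hv) (HtW Hp) mulmxN mulmxN (HtV (h4_V Hd Hd4 Hv)) (HtW Hdp) opprK.
Qed.

Lemma conj_m4 d : in_m4 V d -> t * d * t = - d.
Proof.
move=> [Hd [H1 H2]]; apply: mx_ext => x; rewrite conj_app.
have [v [p [Hv Hp ->]]] := Hdec x.
rewrite !mulmxDr (HtV Hv) (HtW Hp) mulmxN mulmxN (HtW (H1 _ Hv)) (HtV (H2 _ Hp)).
by rewrite !mulNmx.
Qed.

Lemma uniq0 d : in_h4 V d -> in_m4 V d -> d = 0.
Proof.
move=> [Hd Hd4] [_ [H1 H2]].
have HW : forall p, in_perp V p -> d *m p = 0.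
  by move=> p Hp; apply: VW0 (H2 _ Hp) (Hd4 _ Hp).
have HVz : forall v, v \in V -> d *m v = 0.
  move=> v Hv; set u := d *m v.
  have Hu : in_perp V u by apply: H1.
  have [a [Ha Haa]] := Hexa.
  have Hp : in_perp V (cross a u) by apply: VxW'.
  have : d *m cross v (cross a u) = 0.
    by apply: HW; apply: VxW'.
  rewrite Hd (HW _ Hp) cross0r addr0 /u.
  rewrite (crossC a) crossNr cross_dbl (dotC (d *m v) a) (dotVW Hu Ha) scale0r sub0r.
  have Ha0 : a != 0 by apply: contra Haa => /eqP ->; rewrite dot0l.
  rewrite opprK; move/eqP; rewrite scaler_eq0 (negbTE Ha0) orbF => /eqP.
  by move/dot_eq0.
apply: mx_ext => x; rewrite mul0mx.
have [v [p [Hv Hp ->]]] := Hdec x.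
by rewrite mulmxDr HVz // HW // addr0.
Qed.


Lemma a_app (d : 'M[R]_7) x (s : R) :
  (s *: (d + t * d * t)) *m x = s *: (d *m x + t *m (d *m (t *m x))).
Proof. by rewrite -scalemxAl mulmxDl conj_app. Qed.
Lemma b_app (d : 'M[R]_7) x (s : R) :
  (s *: (d - t * d * t)) *m x = s *: (d *m x - t *m (d *m (t *m x))).
Proof. by rewrite -scalemxAl mulmxBl conj_app. Qed.

Variable h : {vspace 'M[R]_7}.
Hypothesis Hder : forall d, d \in h -> is_der d.

Lemma fwd : adapted V h -> in_Hh h t.
Proof.
move=> [Had _]; split; first exact: t_G2.
move=> d Hd; rewrite t_inv.
have [a0 [b0 [Ha0 Ha04 Hb0 Hb04 ->]]] := Had d Hd.
rewrite mulrDr mulrDl (conj_h4 (Hder Ha0) Ha04) (conj_m4 Hb04).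
by rewrite memvB.
Qed.

Lemma bwd : in_Hh h t -> adapted V h.
Proof.
move=> [_ Hc]; split; last by move=> d _ H4 M4; exact: uniq0.
move=> d Hd.
have He : t * d * t \in h by have := Hc d Hd; rewrite t_inv.
have Hah : 2^-1 *: (d + t * d * t) \in h by rewrite memvZ // memvD.
have Hbh : 2^-1 *: (d - t * d * t) \in h by rewrite memvZ // memvB.
exists (2^-1 *: (d + t * d * t)), (2^-1 *: (d - t * d * t)); split => //.
- split; first exact: Hder.
  move=> x Hx; apply: eig_m.
  rewrite a_app (HtW Hx) !mulmxN -scalemxAr mulmxDr mulmxN tt.
  set y := d *m x; set ty := t *m y.
  zvec.
- split; first exact: Hder.
  split.
  + move=> x Hx; apply: eig_m.
    rewrite b_app (HtV Hx) -scalemxAr mulmxBr tt.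
    set y := d *m x; set ty := t *m y.
    zvec.
  + move=> x Hx; apply: eig_p.
    rewrite b_app (HtW Hx) !mulmxN -scalemxAr mulmxBr mulmxN tt.
    set y := d *m x; set ty := t *m y.
    zvec.
- set e := t * d * t.
  apply/matrixP => i j; rewrite !mxE.
  by field.
Qed.

End Main.

Theorem mainTheorem10 (R : realType) (V : {vspace 'cV[R]_7})
    (h : {vspace 'M[R]_7}) (thetaV : 'M[R]_7) :
  in_MS V -> principal_subalg h ->
  (forall x, x \in V -> thetaV *m x = x) ->
  (forall x, in_perp V x -> thetaV *m x = - x) ->
  (adapted V h <-> in_Hh h thetaV).
Proof.
move=> HV Hh HtV HtW.
case: Hh => _ [Hder _] _ _.
have Hexa := ex_a HV.
have [a [Ha Haa]] := Hexa.
have [b [Hb Hbb Hab]] := ex_b HV Ha Haa.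
have Hdec := decomp HV Ha Hb Haa Hbb Hab.
have HWW := WxW HV Ha Hb Haa Hbb Hab.
have Hexp := ex_p HV Ha Hb Haa Hbb Hab.
split.
- exact: (fwd HV Hdec HWW Hexp HtV HtW Hder).
- exact: (bwd HV Hdec Hexa HtV HtW Hder).
Qed.
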